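(* Let $s,r,R$ be positive integers with $s\ge 2$, let $t=s-R-1$, and assume $\delta=R-rt\le 0$. Let $m\in\mathbb F_q^{s\times r}$ be the matrix whose rows $m_1,\dots,m_{R+1}$ all equal $e_1=(1,0,\dots,0)\in\mathbb F_q^{1\times r}$ and whose rows $m_{R+2},\dots,m_s$ are zero. Let $c\in\mathbb F_q^{s\times r}$ satisfy $c\in B(m,R)$ and $B(c,R)\cap B(R)=\emptyset$. Then $c_i=e_1$ for all $1\le i\le R+1$, and $\sum_{i=R+2}^{s}w(c_i)=R$.
   Context: $q$ is a prime power, $\mathbb F_q^{s\times r}$ the set of $s\times r$ matrices over $\mathbb F_q$ with rows $c_1,\dots,c_s\in\mathbb F_q^{1\times r}$. For a row $y=(y_1,\dots,y_r)$, the NRT weight is $w(y)=\max\{j: y_j\neq 0\}$ if $y\ne0$ and $w(0)=0$; for a matrix, $w(x)=\sum_i w(x_i)$. The NRT metric is $d(x,y)=w(x-y)$; $B(c,R)=\{x: d(x,c)\le R\}$, $B(R)=B(0,R)$. Note $\delta=R-rt$ equals $(r+1)(R+1)-sr-1$. *)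

(* Defs.v *)
From mathcomp Require Import all_boot all_order all_algebra all_field.
Set Implicit Arguments. Unset Strict Implicit. Unset Printing Implicit Defensive.
Import GRing.Theory Num.Theory.
Local Open Scope ring_scope.

(* F plays the role of F_q (any finite field). Columns are indexed by 'I_r,
   i.e. 0-based; the paper's 1-based column index j corresponds to j.+1. *)

Definition nrt_row_weight (F : finFieldType) (r : nat) (y : 'rV[F]_r) : nat :=
  \max_(j : 'I_r | y 0 j != 0) j.+1.

Definition nrt_weight (F : finFieldType) (s r : nat) (x : 'M[F]_(s, r)) : nat :=
  \sum_(i : 'I_s) nrt_row_weight (row i x).

Definition nrt_dist (F : finFieldType) (s r : nat) (x y : 'M[F]_(s, r)) : nat :=
  nrt_weight (x - y).

Definition nrt_ball (F : finFieldType) (s r : nat) (c : 'M[F]_(s, r)) (R : nat)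
  : {set 'M[F]_(s, r)} := [set x | (nrt_dist x c <= R)%N].

Definition e1 (F : finFieldType) (r : nat) : 'rV[F]_r :=
  \row_(j < r) (if (j : nat) == 0%N then 1 else 0).

Definition mR (F : finFieldType) (s r R : nat) : 'M[F]_(s, r) :=
  \matrix_(i < s, j < r) (if (i < R.+1)%N then e1 F r 0 j else 0).

(* Main.v *)
Require Import Defs.
From mathcomp Require Import all_boot all_order all_algebra all_field.
From mathcomp Require Import zify.
Import GRing.Theory Num.Theory.
Local Open Scope ring_scope.

Lemma subsum (I : finType) (P Q : pred I) (F : I -> nat) :
  (forall i, P i -> Q i) -> (\sum_(i | P i) F i <= \sum_(i | Q i) F i)%N.
Proof.
move=> PQ; rewrite [X in (_ <= X)%N](bigID P) /=.
rewrite (eq_bigl P); first exact: leq_addr.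
by move=> i; case: (boolP (P i)) => Pi; rewrite ?andbT ?andbF ?PQ.
Qed.

Lemma w_le (F : finFieldType) r (y : 'rV[F]_r) n :
  (forall j : 'I_r, y 0 j != 0 -> (j < n)%N) -> (nrt_row_weight y <= n)%N.
Proof. by move=> H; apply/bigmax_leqP => j /H. Qed.

Lemma w_ge {F : finFieldType} {r} {y : 'rV[F]_r} {j : 'I_r} :
  y 0 j != 0 -> (j < nrt_row_weight y)%N.
Proof. by move=> H; exact: (@leq_bigmax_cond _ (fun j : 'I_r => y 0 j != 0) (fun j : 'I_r => j.+1) j). Qed.

Lemma w0 (F : finFieldType) r : nrt_row_weight (0 : 'rV[F]_r) = 0%N.
Proof. by apply/eqP; rewrite -leqn0; apply: w_le => j; rewrite mxE eqxx. Qed.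

Lemma wN (F : finFieldType) r (y : 'rV[F]_r) : nrt_row_weight (- y) = nrt_row_weight y.
Proof.
apply/eqP; rewrite eqn_leq; apply/andP; split; apply: w_le => j Hj; apply: w_ge;
  move: Hj; by rewrite !mxE ?oppr_eq0.
Qed.

Lemma wD (F : finFieldType) r (y z : 'rV[F]_r) :
  (nrt_row_weight (y + z) <= maxn (nrt_row_weight y) (nrt_row_weight z))%N.
Proof.
apply: w_le => j; rewrite mxE => H.
case: (boolP (y 0 j != 0)) => Hy.
  by rewrite leq_max (w_ge Hy).
have Hz : z 0 j != 0 by move: Hy H; rewrite negbK => /eqP ->; rewrite add0r.
by rewrite leq_max (w_ge Hz) orbT.
Qed.

Lemma w_pos (F : finFieldType) r (y : 'rV[F]_r) : y != 0 -> (0 < nrt_row_weight y)%N.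
Proof.
move=> /eqP Hy; case: (boolP [exists j, y 0 j != 0]).
  by move=> /existsP [j Hj]; apply: leq_ltn_trans (w_ge Hj).
move=> /existsPn H; exfalso; apply: Hy; apply/rowP => j.
by have := H j; rewrite negbK mxE => /eqP.
Qed.

Lemma we1 (F : finFieldType) r : (0 < r)%N -> nrt_row_weight (e1 F r) = 1%N.
Proof.
move=> hr; apply/eqP; rewrite eqn_leq; apply/andP; split.
  apply: w_le => j; rewrite /e1 mxE; case: j => [[|j]] //= _; by rewrite eqxx.
have := @w_ge F r (e1 F r) (Ordinal hr); rewrite /e1 mxE /= oner_eq0; exact.
Qed.


Lemma sum_lt (n m : nat) : (\sum_(i < n | (i < m)%N) 1 = minn n m)%N.
Proof.
elim: n => [|n IH]; first by rewrite big_ord0 min0n.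
rewrite big_mkcond big_ord_recr /= -big_mkcond IH /=.
case: (ltnP n m) => H; lia.
Qed.

Theorem mainTheorem8 (F : finFieldType) (s r R : nat)
  (hs : (2 <= s)%N) (hr : (0 < r)%N) (hR : (0 < R)%N)
  (hdelta : (R%:Z - r%:Z * (s%:Z - R%:Z - 1)) <= 0)
  (c : 'M[F]_(s, r))
  (hc : c \in nrt_ball (mR F s r R) R)
  (hdisj : nrt_ball c R :&: nrt_ball 0 R = set0) :
  (forall i : 'I_s, (i < R.+1)%N -> row i c = e1 F r) /\
  (\sum_(i : 'I_s | (R.+1 <= i)%N) nrt_row_weight (row i c) = R)%N.
Proof.
pose wc := fun i : 'I_s => nrt_row_weight (row i c).
pose wd := fun i : 'I_s => nrt_row_weight (row i (c - mR F s r R)).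
have Hd : (\sum_i wd i <= R)%N by move: hc; rewrite inE /nrt_dist /nrt_weight.
have Hrow : forall i : 'I_s, row i (c - mR F s r R) =
    row i c - (if (i < R.+1)%N then e1 F r else 0).
  move=> k; apply/rowP => j; rewrite !mxE; case: ifP => _; by rewrite ?mxE.
have Hge : forall i : 'I_s, ~~ (i < R.+1)%N -> wc i = wd i.
  by move=> i Hi; rewrite /wc /wd Hrow (negbTE Hi) subr0.
have Hne : forall i : 'I_s, (i < R.+1)%N -> row i c != e1 F r -> (wc i <= wd i)%N.
  move=> i Hi Hn; rewrite /wd Hrow Hi.
  have Hp := @w_pos F r (row i c - e1 F r); rewrite subr_eq0 in Hp; have {}Hp := Hp Hn.
  have E : row i c = (row i c - e1 F r) + e1 F r by rewrite subrK.
  rewrite /wc {1}E.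
  apply: leq_trans (wD _ _ _ _) _; rewrite we1 //; lia.
have Hdisj : forall P : pred 'I_s,
    (R < \sum_(i | P i) wc i)%N \/ (R < \sum_(i | ~~ P i) wc i)%N.
  move=> P; case: (leqP (\sum_(i | P i) wc i) R) => H1; last by left.
  case: (leqP (\sum_(i | ~~ P i) wc i) R) => H2; last by right.
  pose x := \matrix_(i, j) (if P i then c i j else 0).
  have Hx : forall i, row i x = if P i then row i c else 0.
    by move=> i; apply/rowP => j; rewrite !mxE; case: (P i); rewrite ?mxE.
  have : x \in (set0 : {set 'M[F]_(s, r)}).
    rewrite -hdisj !inE /nrt_dist /nrt_weight; apply/andP; split.
      rewrite (bigID P) /= big1 ?add0n; last first.
        by move=> i Pi; rewrite linearB /= Hx Pi subrr w0.
      apply: leq_trans H2; rewrite leq_eqVlt; apply/orP; left; apply/eqP.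
      by apply: eq_bigr => i Pi; rewrite linearB /= Hx (negbTE Pi) sub0r wN.
    rewrite (bigID P) /= [X in (_ + X)%N]big1 ?addn0; last first.
      by move=> i Pi; rewrite subr0 Hx (negbTE Pi) w0.
    apply: leq_trans H1; rewrite leq_eqVlt; apply/orP; left; apply/eqP.
    by apply: eq_bigr => i Pi; rewrite subr0 Hx Pi.
  by rewrite inE.
have Hcnt : forall i0 : 'I_s, (i0 < R.+1)%N ->
    (\sum_(i : 'I_s | (i < R.+1)%N && (i != i0)) 1 <= R)%N.
  move=> i0 Hi0; have := sum_lt s R.+1; rewrite (bigD1 i0) //=; rewrite add1n => E; have := geq_minr s R.+1; by rewrite -E ltnS.
have Hwd : forall Q : pred 'I_s, (\sum_(i | Q i) wd i <= R)%N.
  by move=> Q; apply: leq_trans Hd; apply: subsum.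
have C1 : forall i : 'I_s, (i < R.+1)%N -> row i c = e1 F r.
  move=> i0 Hi0; apply/eqP; apply/negPn/negP => Hn0.
  pose P := fun i : 'I_s => (i < R.+1)%N && (row i c == e1 F r).
  case: (Hdisj P) => H.
    have : (\sum_(i | P i) wc i <= R)%N.
      rewrite (eq_bigr (fun _ => 1%N)); last first.
        by move=> i /andP [_ /eqP E]; rewrite /wc E we1.
      apply: leq_trans (Hcnt i0 Hi0); apply: subsum => i /andP [-> E] /=.
      by apply/eqP => Ei; move: E Hn0; rewrite Ei => ->.
    lia.
  have : (\sum_(i | ~~ P i) wc i <= R)%N.
    apply: leq_trans (Hwd (fun i => ~~ P i)); apply: leq_sum => i.
    rewrite /P negb_and; case: (boolP (i < R.+1)%N) => Hi /=.
      exact: Hne.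
    by rewrite Hge.
  lia.
split => //.
set T := (\sum_(i : 'I_s | (R.+1 <= i)%N) _)%N.
have TR : (T <= R)%N.
  rewrite /T (eq_bigr wd); first exact: Hwd.
  by move=> i Hi; apply: Hge; rewrite -leqNgt.
have s0 : (0 < s)%N by lia.
pose i0 : 'I_s := Ordinal s0.
apply/eqP; rewrite eqn_leq TR /=.
pose P := fun i : 'I_s => (i < R.+1)%N && (i != i0).
case: (Hdisj P) => H.
  have : (\sum_(i | P i) wc i <= R)%N.
    rewrite (eq_bigr (fun _ => 1%N)); last first.
      by move=> i /andP [Hi _]; rewrite /wc C1 // we1.
    exact: Hcnt.
  lia.
move: H; rewrite (bigD1 i0) /=; last by [].
rewrite /wc C1 // we1 //.
have : (\sum_(i | ~~ P i && (i != i0)) nrt_row_weight (row i c) <= T)%N.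
  apply: subsum => i; rewrite /P negb_and negbK => /andP [/orP [H|/eqP ->] //].
    by rewrite ltnNge.
move=> A; rewrite add1n ltnS => B; exact: leq_trans B A.
Qed.
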